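(* Physically incoherent operations preserve $\mathrm{co}(\mathcal U)$: if $\rho\in\mathrm{co}(\mathcal U)$ and $\Lambda$ is a PIO, then $\Lambda(\rho)\in\mathrm{co}(\mathcal U)$.
   Context: Fixed computational basis $\{|i\rangle\}_{i=1}^d$. $\mathcal U_k$ is the set of uniformly coherent states $|\Psi\rangle=k^{-1/2}\sum_{j\in J}e^{i\theta_j}|j\rangle$, $J\subseteq[d]$, $|J|=k$, $\theta_j\in\mathbb R$; $\mathcal U=\bigcup_{k=1}^d\mathcal U_k$ (as density matrices $|\Psi\rangle\langle\Psi|$), and $\mathrm{co}(\mathcal U)$ its convex hull. PIO: channels $X\mapsto\sum_{\alpha,\beta}p_\alpha U_{\alpha,\beta}\Pi_{\beta|\alpha}X\Pi_{\beta|\alpha}U_{\alpha,\beta}^\dagger$ with $p$ a probability distribution, $U_{\alpha,\beta}$ incoherent unitaries (permutation matrix times diagonal unitary), and for each $\alpha$ incoherent projectors $\Pi_{\beta|\alpha}=\sum_{i\in I_{\beta|\alpha}}|i\rangle\langle i|$ summing to the identity. *)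

(* Defs.v *)
From HB Require Import structures.
From mathcomp Require Import all_boot all_order all_algebra.
From mathcomp Require Import all_classical all_reals.
From mathcomp Require Import trigo.
From mathcomp Require Import perm complex.

Set Implicit Arguments.
Unset Strict Implicit.
Unset Printing Implicit Defensive.

Import Order.TTheory GRing.Theory Num.Theory.
Local Open Scope ring_scope.
Local Open Scope complex_scope.

Section Defs.
Variable R : realType.
Local Notation C := R[i].

Definition phase (t : R) : C := (cos t) +i* (sin t).

Definition adjmx m n (A : 'M[C]_(m, n)) : 'M[C]_(n, m) := (map_mx conjc A)^T.

Definition proj_state d (psi : 'cV[C]_d) : 'M[C]_d := psi *m adjmx psi.

Definition unif_vec d (J : {set 'I_d}) (theta : 'I_d -> R) : 'cV[C]_d :=
  \col_j (if j \in J then ((Num.sqrt (#|J|%:R : R))^-1)%:C * phase (theta j) else 0).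

Definition in_Uk d (k : nat) (rho : 'M[C]_d) : Prop :=
  exists (J : {set 'I_d}) (theta : 'I_d -> R),
    #|J| = k /\ rho = proj_state (unif_vec J theta).

Definition in_U d (rho : 'M[C]_d) : Prop :=
  exists k : nat, (1 <= k <= d)%N /\ in_Uk k rho.

Definition in_coU d (rho : 'M[C]_d) : Prop :=
  exists (n : nat) (w : 'I_n -> R) (rhos : 'I_n -> 'M[C]_d),
    (forall i, 0 <= w i) /\ \sum_i w i = 1 /\
    (forall i, in_U (rhos i)) /\
    rho = \sum_i (w i)%:C *: rhos i.

Definition inc_proj d (I : {set 'I_d}) : 'M[C]_d :=
  \sum_(i in I) delta_mx i i.

Definition inc_unitary d (s : {perm 'I_d}) (phi : 'I_d -> R) : 'M[C]_d :=
  perm_mx s *m diag_mx (\row_i phase (phi i)).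

Definition isPIO d (Lam : 'M[C]_d -> 'M[C]_d) : Prop :=
  exists (m n : nat) (p : 'I_m -> R)
         (s : 'I_m -> 'I_n -> {perm 'I_d}) (phi : 'I_m -> 'I_n -> 'I_d -> R)
         (I : 'I_m -> 'I_n -> {set 'I_d}),
    (forall a, 0 <= p a) /\ \sum_a p a = 1 /\
    (forall a, \sum_b inc_proj (I a b) = 1%:M) /\
    forall X : 'M[C]_d,
      Lam X = \sum_a \sum_b (p a)%:C *:
        (inc_unitary (s a b) (phi a b) *m inc_proj (I a b) *m X
           *m inc_proj (I a b) *m adjmx (inc_unitary (s a b) (phi a b))).

End Defs.

(* Main.v *)
Require Import Defs.
From mathcomp Require Import all_boot all_order all_algebra.
From mathcomp Require Import all_classical all_reals.
From mathcomp Require Import complex.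
From mathcomp Require Import trigo perm.
From mathcomp Require Import ring.
Set Implicit Arguments.
Unset Strict Implicit.
Unset Printing Implicit Defensive.
Import Order.TTheory GRing.Theory Num.Theory.
Local Open Scope ring_scope.

Section Aux.
Variable R : realType.
Local Notation C := R[i].
Local Open Scope complex_scope.

Definition coneW d (M : 'M[C]_d) (t : R) : Prop :=
  exists (n : nat) (w : 'I_n -> R) (rhos : 'I_n -> 'M[C]_d),
    (forall i, 0 <= w i) /\ \sum_i w i = t /\
    (forall i, in_U (rhos i)) /\
    M = \sum_i (w i)%:C *: rhos i.

Lemma cone0 d : coneW (0 : 'M[C]_d) 0.
Proof.
exists 0%N, (fun _ => 0), (fun _ => 0).
split; [by case| split; [by rewrite big_ord0 | split; [by case | by rewrite big_ord0]]].
Qed.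

Lemma coneD d (M1 M2 : 'M[C]_d) t1 t2 :
  coneW M1 t1 -> coneW M2 t2 -> coneW (M1 + M2) (t1 + t2).
Proof.
move=> [n1 [w1 [r1 [h1 [s1 [u1 e1]]]]]] [n2 [w2 [r2 [h2 [s2 [u2 e2]]]]]].
exists (n1 + n2)%N,
  (fun i => match fintype.split i with inl j => w1 j | inr j => w2 j end),
  (fun i => match fintype.split i with inl j => r1 j | inr j => r2 j end).
split; first by move=> i; case: (fintype.split i).
split; first by rewrite big_split_ord /= -s1 -s2; congr (_ + _);
  apply: eq_bigr => i _; first [by rewrite (unsplitK (inl _ i)) | by rewrite (unsplitK (inr _ i))].
split; first by move=> i; case: (fintype.split i).
rewrite big_split_ord /= e1 e2; congr (_ + _);
  apply: eq_bigr => i _; first [by rewrite (unsplitK (inl _ i)) | by rewrite (unsplitK (inr _ i))].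
Qed.

Lemma coneZ d (M : 'M[C]_d) t c :
  0 <= c -> coneW M t -> coneW (c%:C *: M) (c * t).
Proof.
move=> c0 [n [w [r [h [s [u e]]]]]].
exists n, (fun i => c * w i), r; split; first by move=> i; rewrite mulr_ge0.
split; first by rewrite -mulr_sumr s.
split; first by [].
rewrite e scaler_sumr; apply: eq_bigr => i _.
by rewrite scalerA rmorphM.
Qed.

Lemma coneSum d n (F : 'I_n -> 'M[C]_d) (T : 'I_n -> R) :
  (forall i, coneW (F i) (T i)) -> coneW (\sum_i F i) (\sum_i T i).
Proof.
move=> H; apply: (big_rec2 (fun M t => coneW M t)); first exact: cone0.
by move=> i M t _ HM; apply: coneD.
Qed.

Lemma coneU d (M : 'M[C]_d) : in_U M -> coneW M 1.
Proof.
move=> HM; exists 1%N, (fun _ => 1), (fun _ => M); split; first by [].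
split; first by rewrite big_ord1.
split; first by [].
by rewrite big_ord1 scale1r.
Qed.


Lemma adjmx_mul m n p (A : 'M[C]_(m, n)) (B : 'M[C]_(n, p)) :
  adjmx (A *m B) = adjmx B *m adjmx A.
Proof. by rewrite /adjmx map_mxM trmx_mul. Qed.

Lemma inc_projE d (I : {set 'I_d}) :
  inc_proj R I = diag_mx (\row_i ((i \in I)%:R : C)).
Proof.
apply/matrixP => x y; rewrite /inc_proj summxE !mxE.
case: (eqVneq x y) => [<-|nxy] /=.
  case: (boolP (x \in I)) => xI.
    rewrite (bigD1 x) //= !mxE eqxx /= big1 ?addr0 // => k /andP[_].
    by rewrite !mxE eq_sym => /negbTE ->.
  rewrite big1 // => k kI; rewrite !mxE.
  by case: eqP => //= ekx; rewrite ekx kI in xI.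
rewrite mulr0n big1 // => k _; rewrite !mxE.
case: (eqVneq x k) => [exk|] //=; case: (eqVneq y k) => [eyk|] //=.
by rewrite exk eyk eqxx in nxy.
Qed.

Lemma adjmx_inc_proj d (I : {set 'I_d}) : adjmx (inc_proj R I) = inc_proj R I.
Proof.
rewrite inc_projE; apply/matrixP => x y; rewrite /adjmx !mxE.
case: (eqVneq y x) => [->|nxy]; last by rewrite !mulr0n conjc0.
by rewrite !mulr1n; case: (x \in I); rewrite ?conjc1 ?conjc0.
Qed.

Lemma phaseD (a b : R) : phase (a + b) = phase a * phase b.
Proof.
rewrite /phase cosD sinD; apply/eqP; rewrite eq_complex /=.
apply/andP; split; apply/eqP; ring.
Qed.

Lemma conjR (x : R) : conjc (x%:C) = x%:C :> C.
Proof. by rewrite /conjc /= oppr0. Qed.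

Lemma proj_stateZ d (u : 'cV[C]_d) (c : R) :
  proj_state (c%:C *: u) = (c ^+ 2)%:C *: proj_state u.
Proof.
rewrite /proj_state.
have -> : adjmx (c%:C *: u) = c%:C *: adjmx u.
  apply/matrixP => x y; rewrite /adjmx !mxE; case: (u y x) => a b; apply/eqP; rewrite eq_complex /=; apply/andP; split; apply/eqP; ring.
by rewrite -scalemxAl -scalemxAr scalerA -rmorphM expr2.
Qed.


Lemma key d (s : {perm 'I_d}) (phi theta : 'I_d -> R) (I J : {set 'I_d}) :
  inc_unitary s phi *m inc_proj R I *m unif_vec J theta =
  (Num.sqrt (#|J :&: I|%:R) / Num.sqrt (#|J|%:R))%:C *:
     unif_vec (s @^-1: (J :&: I)) (fun i => theta (s i) + phi (s i)).
Proof.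
apply/matrixP => i j; rewrite /inc_unitary -!mulmxA -row_permE inc_projE !mul_diag_mx.
rewrite !mxE card_preimset; last exact: perm_inj.
rewrite !inE.
case: (boolP (s i \in J)) => hJ; case: (boolP (s i \in I)) => hI /=;
  rewrite ?mul0r ?mulr0 //.
have kp : (0 < #|J :&: I|)%N by apply/card_gt0P; exists (s i); rewrite inE hJ hI.
have kp' : (0 < #|J|)%N by apply/card_gt0P; exists (s i).
have nz : forall n : nat, (0 < n)%N -> (Num.sqrt (n%:R : R))%:C != 0 :> C.
  move=> n np; apply/eqP => /eqP; rewrite eq_complex /= eqxx andbT sqrtr_eq0.
  by rewrite lern0 => /eqP n0; rewrite n0 in np.
have n1 := nz _ kp; have n2 := nz _ kp'.
rewrite phaseD mul1r.
move: n1 n2; set a := Num.sqrt (#|J :&: I|%:R : R); set b := Num.sqrt (#|J|%:R : R).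
clearbody a b => n1 n2.
have -> : ((a / b)%:C : C) = a%:C * (b%:C)^-1 by rewrite rmorphM fmorphV.
have -> : ((b^-1)%:C : C) = (b%:C)^-1 by rewrite fmorphV.
have -> : ((a^-1)%:C : C) = (a%:C)^-1 by rewrite fmorphV.
move: n1 n2; move: (a%:C) (b%:C) => x y n1 n2.
rewrite (mulrC x) -mulrA (mulrA x) mulfV // mul1r mulrCA; congr (_ * _); exact: mulrC.
Qed.


Lemma count_part d m (I : 'I_m -> {set 'I_d}) (J : {set 'I_d}) :
  \sum_b inc_proj R (I b) = 1%:M -> (\sum_b #|J :&: I b|)%N = #|J|.
Proof.
move=> H.
have h1 : forall j, (\sum_b (j \in I b) : nat)%N = 1%N.
  move=> j; have /matrixP/(_ j j) := H; rewrite summxE mxE eqxx /=.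
  under eq_bigr do rewrite inc_projE !mxE eqxx mulr1n.
  by rewrite -natr_sum => /eqP; rewrite pnatr_eq1 => /eqP.
have h2 : forall b, #|J :&: I b| = (\sum_(j in J) (j \in I b) : nat)%N.
  move=> b; rewrite -sum1_card big_mkcond [RHS]big_mkcond /=.
  by apply: eq_bigr => j _; rewrite inE; case: (j \in J); case: (j \in I b).
under eq_bigr do rewrite h2.
rewrite exchange_big /= -sum1_card; apply: eq_bigr => j _; exact: h1.
Qed.

Lemma term d (s : {perm 'I_d}) phi (I J : {set 'I_d}) theta :
  (0 < #|J|)%N ->
  coneW (inc_unitary s phi *m inc_proj R I *m proj_state (unif_vec J theta)
           *m inc_proj R I *m adjmx (inc_unitary s phi))
        (#|J :&: I|%:R / #|J|%:R).
Proof.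
move=> kp.
have -> : inc_unitary s phi *m inc_proj R I *m proj_state (unif_vec J theta)
           *m inc_proj R I *m adjmx (inc_unitary s phi)
   = proj_state (inc_unitary s phi *m inc_proj R I *m unif_vec J theta).
  by rewrite /proj_state !adjmx_mul adjmx_inc_proj !mulmxA.
rewrite key proj_stateZ.
case: (posnP #|J :&: I|) => [k0|kp'].
  rewrite k0 sqrtr0 mul0r expr0n /= scale0r.
  rewrite (_ : (0%:R : R) = 0) // mul0r; exact: cone0.
set K' := s @^-1: (J :&: I).
have cK : #|K'| = #|J :&: I| by rewrite card_preimset //; exact: perm_inj.
have HU : in_U (proj_state (unif_vec K' (fun i => theta (s i) + phi (s i)))).
  exists #|K'|; split.
    by rewrite cK kp' /=; apply: leq_trans (max_card _) _; rewrite card_ord.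
  by exists K', (fun i => theta (s i) + phi (s i)).
have := coneZ (c := (Num.sqrt (#|J :&: I|%:R : R) / Num.sqrt (#|J|%:R : R)) ^+ 2) _ (coneU HU).
rewrite mulr1 expr_div_n !sqr_sqrtr ?ler0n //; apply.
by rewrite ?exprn_ge0 ?divr_ge0 ?sqrtr_ge0 ?ler0n.
Qed.


Lemma lin d n (A B Cm : 'M[C]_d) (c : 'I_n -> C) (X : 'I_n -> 'M[C]_d) :
  A *m (\sum_i c i *: X i) *m B *m Cm = \sum_i c i *: (A *m X i *m B *m Cm).
Proof.
rewrite mulmx_sumr !mulmx_suml; apply: eq_bigr => i _.
by rewrite -!mulmxA -scalemxAl -scalemxAr.
Qed.

End Aux.

Theorem lemma11 (R : realType) (d : nat) (Lam : 'M[R[i]]_d -> 'M[R[i]]_d)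
  (rho : 'M[R[i]]_d) :
  isPIO Lam -> in_coU rho -> in_coU (Lam rho).
Proof.
Local Open Scope complex_scope.
move=> [m [nb [p [s [phi [I [hp [sp [hI HL]]]]]]]]] [n [w [rhos [hw [sw [hU er]]]]]].
have Hs : forall sg, in_U sg -> coneW (\sum_a \sum_b (p a)%:C *:
        (inc_unitary (s a b) (phi a b) *m inc_proj R (I a b) *m sg
           *m inc_proj R (I a b) *m adjmx (inc_unitary (s a b) (phi a b)))) 1.
  move=> sg [k [/andP[k1 kd] [J [th [cJ ->]]]]].
  have kp : (0 < #|J|)%N by rewrite cJ.
  have -> : 1 = \sum_a p a * (\sum_b #|J :&: I a b|%:R / #|J|%:R).
    rewrite -{1}sp; apply: eq_bigr => a _.
    rewrite -mulr_suml -natr_sum (@count_part R _ _ _ J (hI a)) // divff ?mulr1 //.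
    by rewrite pnatr_eq0 -lt0n.
  under eq_bigr do rewrite -scaler_sumr.
  apply: coneSum => a; apply: coneZ (hp a) _; apply: coneSum => b.
  exact: term.
have -> : Lam rho = \sum_i (w i)%:C *: (\sum_a \sum_b (p a)%:C *:
        (inc_unitary (s a b) (phi a b) *m inc_proj R (I a b) *m rhos i
           *m inc_proj R (I a b) *m adjmx (inc_unitary (s a b) (phi a b)))).
  rewrite HL er.
  transitivity (\sum_a \sum_b \sum_i (w i)%:C *: ((p a)%:C *:
        (inc_unitary (s a b) (phi a b) *m inc_proj R (I a b) *m rhos i
           *m inc_proj R (I a b) *m adjmx (inc_unitary (s a b) (phi a b))))).
    apply: eq_bigr => a _; apply: eq_bigr => b _.
    rewrite lin scaler_sumr; apply: eq_bigr => i _.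
    by rewrite !scalerA mulrC.
  under eq_bigr => a _ do rewrite exchange_big.
  rewrite exchange_big; apply: eq_bigr => i _ /=.
  rewrite scaler_sumr; apply: eq_bigr => a _.
  by rewrite scaler_sumr.
have := coneSum (fun i => coneZ (hw i) (Hs _ (hU i))).
have E : \sum_i w i * 1 = 1 by rewrite -[RHS]sw; apply: eq_bigr => i _; rewrite mulr1.
by rewrite E.
Qed.
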